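(* Let $a<b$, $c<d$, and let $f:[a,b]\times[c,d]\to\mathbb{R}_+$ be a nonnegative function that is convex on the coordinates. Let $n\in\mathbb{N}$ and set $x_k=a+k\frac{b-a}{n}$ and $y_k=c+k\frac{d-c}{n}$ for $k=0,1,\dots,n$. Then \begin{align*} \int_a^b\int_c^d f(x, y)\,dx\,dy &\leq \frac{b-a}{4n}\Big[(n+1)\int_c^d f(a,y)\,dy+(n+1)\int_c^d f(b,y)\,dy+2\sum_{k=1}^{n-1} \int_c^d f(x_k,y)\,dy\Big]\\ &\quad +\frac{d-c}{4n}\Big[(n+1)\int_a^b f(x,c)\,dx+(n+1)\int_a^b f(x,d)\,dx+2\sum_{k=1}^{n-1} \int_a^b f(x,y_k)\,dx\Big]. \end{align*}
   Context: A function $f:[a,b]\times[c,d]\to\mathbb{R}$ is called convex on the coordinates if for every $y\in[c,d]$ the partial map $u\mapsto f(u,y)$ is convex on $[a,b]$, and for every $x\in[a,b]$ the partial map $v\mapsto f(x,v)$ is convex on $[c,d]$. Empty sums are zero. *)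

(* Defs.v *)
From Stdlib Require Import Reals Lra ClassicalEpsilon.
Open Scope R_scope.

(* The Riemann integral of g over [a,b], as a total function:
   the value of RiemannInt for any integrability proof (the value is
   independent of the proof, RiemannInt_P5); an arbitrary real if g is
   not Riemann integrable. *)
Definition Rint (g : R -> R) (a b : R) : R :=
  epsilon (inhabits 0)
    (fun I => exists pr : Riemann_integrable g a b, RiemannInt pr = I).

Definition convex_on (a b : R) (g : R -> R) : Prop :=
  forall u v t, a <= u <= b -> a <= v <= b -> 0 <= t <= 1 ->
    g (t * u + (1 - t) * v) <= t * g u + (1 - t) * g v.

Definition convex_coord (a b c d : R) (f : R -> R -> R) : Prop :=
  (forall y, c <= y <= d -> convex_on a b (fun u => f u y)) /\
  (forall x, a <= x <= b -> convex_on c d (fun v => f x v)).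

Fixpoint rsum (F : nat -> R) (n : nat) : R :=
  match n with
  | O => 0
  | S m => rsum F m + F m
  end.

(* Main.v *)
Require Import Defs.
From Stdlib Require Import Reals Lra Lia Classical ClassicalEpsilon.
From Coquelicot Require Import Coquelicot.
Open Scope R_scope.

Lemma Rint_eq g a b : ex_RInt g a b -> Rint g a b = RInt g a b.
Proof.
  intros H. pose proof (ex_RInt_Reals_0 _ _ _ H) as pr.
  unfold Rint.
  assert (ex : exists I, exists pr : Riemann_integrable g a b, RiemannInt pr = I)
    by (exists (RiemannInt pr); exists pr; reflexivity).
  destruct (epsilon_spec (inhabits 0) _ ex) as [pr' Hpr'].
  rewrite <- Hpr'. symmetry. apply RInt_Reals.
Qed.

Lemma chord p q g x y z : convex_on p q g -> p <= x -> x <= y -> y <= z -> z <= q -> x < z ->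
  (z - x) * g y <= (z - y) * g x + (y - x) * g z.
Proof.
  intros Hc h1 h2 h3 h4 h5.
  set (t := (z - y) / (z - x)).
  assert (Ht : 0 <= t <= 1).
  { unfold t; split.
    - apply Rdiv_le_0_compat; lra.
    - apply Rmult_le_reg_r with (z - x); [lra|].
      unfold Rdiv; rewrite Rmult_assoc, Rinv_l by lra; lra. }
  pose proof (Hc x z t ltac:(lra) ltac:(lra) Ht) as H.
  replace (t * x + (1 - t) * z) with y in H by (unfold t; field; lra).
  apply Rmult_le_compat_l with (r := z - x) in H; [|lra].
  replace ((z - y) * g x + (y - x) * g z) with ((z - x) * (t * g x + (1 - t) * g z))
    by (unfold t; field; lra).
  exact H.
Qed.

Lemma slope_mono p q g x y m : convex_on p q g -> p <= x -> x <= y -> y < m -> m <= q ->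
  (g m - g x) / (m - x) <= (g m - g y) / (m - y).
Proof.
  intros Hc h1 h2 h3 h4.
  pose proof (chord p q g x y m Hc h1 h2 ltac:(lra) h4 ltac:(lra)) as H.
  apply Rmult_le_reg_r with ((m - x) * (m - y)).
  { apply Rmult_lt_0_compat; lra. }
  replace ((g m - g x) / (m - x) * ((m - x) * (m - y))) with ((g m - g x) * (m - y)) by (field; lra).
  replace ((g m - g y) / (m - y) * ((m - x) * (m - y))) with ((g m - g y) * (m - x)) by (field; lra).
  nra.
Qed.

Lemma lip p q g z x : convex_on p q g -> p < z < q -> p <= x <= q ->
  Rabs (g x - g z) <= (Rabs (g z - g p) / (z - p) + Rabs (g q - g z) / (q - z)) * Rabs (x - z).
Proof.
  intros Hc Hz Hx.
  set (A := (g q - g z) / (q - z)). set (B := (g z - g p) / (z - p)).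
  assert (EA : Rabs (g q - g z) / (q - z) = Rabs A).
  { unfold A; rewrite Rabs_div by lra; rewrite (Rabs_right (q - z)) by lra; reflexivity. }
  assert (EB : Rabs (g z - g p) / (z - p) = Rabs B).
  { unfold B; rewrite Rabs_div by lra; rewrite (Rabs_right (z - p)) by lra; reflexivity. }
  rewrite EA, EB.
  pose proof (Rle_abs A). pose proof (Rle_abs (-A)). rewrite Rabs_Ropp in *.
  pose proof (Rle_abs B). pose proof (Rle_abs (-B)). rewrite Rabs_Ropp in *.
  destruct (Rtotal_order x z) as [Hlt|[Heq|Hgt]].
  -
    pose proof (chord p q g p x z Hc ltac:(lra) ltac:(lra) ltac:(lra) ltac:(lra) ltac:(lra)) as C1.
    pose proof (chord p q g x z q Hc ltac:(lra) ltac:(lra) ltac:(lra) ltac:(lra) ltac:(lra)) as C2.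
    assert (U : g x - g z <= (z - x) * (- B)).
    { apply Rmult_le_reg_l with (z - p); [lra|].
      replace ((z - p) * ((z - x) * - B)) with ((z - x) * (g p - g z)) by (unfold B; field; lra).
      nra. }
    assert (Lo : (z - x) * (- A) <= g x - g z).
    { apply Rmult_le_reg_l with (q - z); [lra|].
      replace ((q - z) * ((z - x) * - A)) with ((z - x) * (g z - g q)) by (unfold A; field; lra).
      nra. }
    rewrite (Rabs_left (x - z)) by lra.
    apply Rabs_le; split; nra.
  - subst. rewrite !Rminus_diag, Rabs_R0, Rmult_0_r. lra.
  - pose proof (chord p q g z x q Hc ltac:(lra) ltac:(lra) ltac:(lra) ltac:(lra) ltac:(lra)) as C1.
    pose proof (chord p q g p z x Hc ltac:(lra) ltac:(lra) ltac:(lra) ltac:(lra) ltac:(lra)) as C2.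
    assert (U : g x - g z <= (x - z) * A).
    { apply Rmult_le_reg_l with (q - z); [lra|].
      replace ((q - z) * ((x - z) * A)) with ((x - z) * (g q - g z)) by (unfold A; field; lra).
      nra. }
    assert (Lo : (x - z) * B <= g x - g z).
    { apply Rmult_le_reg_l with (z - p); [lra|].
      replace ((z - p) * ((x - z) * B)) with ((x - z) * (g z - g p)) by (unfold B; field; lra).
      nra. }
    rewrite (Rabs_right (x - z)) by lra.
    apply Rabs_le; split; nra.
Qed.
Lemma cont_int h p q z K : p < z < q -> 0 <= K ->
  (forall x, p < x < q -> Rabs (h x - h z) <= K * Rabs (x - z)) -> continuous h z.
Proof.
  intros Hz HK Hl. apply continuity_pt_filterlim.
  intros eps Heps.
  assert (Hd : 0 < Rmin (Rmin (z - p) (q - z)) (eps / (K + 1))).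
  { repeat apply Rmin_pos; try lra. apply Rdiv_lt_0_compat; lra. }
  exists (Rmin (Rmin (z - p) (q - z)) (eps / (K + 1))). split; [exact Hd|].
  intros x [_ Hx]. simpl in *. unfold R_dist in *.
  pose proof (Rmin_l (Rmin (z - p) (q - z)) (eps / (K + 1))).
  pose proof (Rmin_r (Rmin (z - p) (q - z)) (eps / (K + 1))).
  pose proof (Rmin_l (z - p) (q - z)). pose proof (Rmin_r (z - p) (q - z)).
  assert (Hx' : p < x < q) by (apply Rabs_def2 in Hx; lra).
  apply Rle_lt_trans with (K * Rabs (x - z)); [apply Hl; exact Hx'|].
  apply Rle_lt_trans with ((K + 1) * Rabs (x - z)).
  { pose proof (Rabs_pos (x - z)); nra. }
  apply Rlt_le_trans with ((K + 1) * (eps / (K + 1))).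
  { apply Rmult_lt_compat_l; lra. }
  right; field; lra.
Qed.

Lemma left_int p m q g : p < m < q -> convex_on p q g -> ex_RInt g p m.
Proof.
  intros Hm Hc.
  set (t := fun x => (g m - g x) / (m - x)).
  assert (Tmono : forall x y, p <= x -> x <= y -> y < m -> t x <= t y).
  { intros x y h1 h2 h3; unfold t; apply (slope_mono p q); [exact Hc|lra..]. }
  set (E := fun v => exists x, p < x < m /\ v = - t x).
  assert (Eb : bound E).
  { exists (- t p). intros v [x [Hx ->]]. apply Ropp_le_contravar, Tmono; lra. }
  assert (Ene : exists v, E v).
  { exists (- t ((p + m) / 2)). exists ((p + m) / 2). split; [lra|reflexivity]. }
  destruct (completeness E Eb Ene) as [S [HS1 HS2]].
  set (T := - S).
  assert (Tlow : forall x, p < x < m -> T <= t x).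
  { intros x Hx. assert (E (- t x)) by (exists x; split; [lra|reflexivity]).
    pose proof (HS1 _ H). unfold T; lra. }
  assert (Tinf : forall e, 0 < e -> exists x0, p < x0 < m /\ t x0 < T + e).
  { intros e He. apply NNPP; intros Hn.
    assert (Hub : is_upper_bound E (S - e)).
    { intros v [x [Hx ->]].
      destruct (Rle_lt_dec (T + e) (t x)) as [Hle|Hlt].
      - unfold T in Hle; lra.
      - exfalso; apply Hn; exists x; split; assumption. }
    pose proof (HS2 _ Hub); lra. }
  set (L := g m - (m - p) * T).
  set (h := fun x => if Rle_dec x p then L else g x).
  assert (hg : forall x, p < x -> h x = g x).
  { intros x Hx; unfold h; destruct (Rle_dec x p); [lra|reflexivity]. }
  apply (ex_RInt_ext h).
  { intros x Hx. rewrite Rmin_left, Rmax_right in Hx by lra. apply hg; lra. }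
  apply (ex_RInt_continuous (V:=R_CompleteNormedModule)).
  intros z Hz. rewrite Rmin_left, Rmax_right in Hz by lra.
  destruct (Req_dec z p) as [Ezp|Nzp].
  - subst z. apply continuity_pt_filterlim.
    intros eps Heps.
    set (e' := eps / (2 * (m - p))).
    assert (He' : 0 < e') by (unfold e'; apply Rdiv_lt_0_compat; lra).
    destruct (Tinf e' He') as [x0 [Hx0 Ht0]].
    set (B := Rabs T + e').
    assert (HB : 0 <= B) by (unfold B; pose proof (Rabs_pos T); lra).
    set (del := Rmin (x0 - p) (eps / (2 * (B + 1)))).
    assert (Hdel : 0 < del).
    { unfold del; apply Rmin_pos; [lra|]. apply Rdiv_lt_0_compat; lra. }
    exists del; split; [exact Hdel|].
    intros x [_ Hx]. simpl in *. unfold R_dist in *.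
    pose proof (Rmin_l (x0 - p) (eps / (2 * (B + 1)))) as D1.
    pose proof (Rmin_r (x0 - p) (eps / (2 * (B + 1)))) as D2.
    fold del in D1, D2.
    assert (hp : h p = L) by (unfold h; destruct (Rle_dec p p); [reflexivity|lra]).
    rewrite hp.
    destruct (Rle_dec x p) as [Hxp|Hxp].
    + assert (h x = L) by (unfold h; destruct (Rle_dec x p); [reflexivity|lra]).
      rewrite H, Rminus_diag, Rabs_R0; lra.
    + rewrite hg by lra.
      apply Rabs_def2 in Hx.
      assert (Hxm : p < x < m) by lra.
      assert (Ht1 : T <= t x) by (apply Tlow; lra).
      assert (Ht2 : t x <= t x0) by (apply Tmono; lra).
      assert (Eg : g x = g m - (m - x) * t x) by (unfold t; field; lra).
      assert (Htb : Rabs (t x) <= B).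
      { unfold B. apply Rabs_le. pose proof (Rle_abs T). pose proof (Rle_abs (-T)).
        rewrite Rabs_Ropp in *. lra. }
      assert (Eq : g x - L = (m - p) * (T - t x) + (x - p) * t x).
      { rewrite Eg; unfold L; ring. }
      rewrite Eq.
      apply Rle_lt_trans with (Rabs ((m - p) * (T - t x)) + Rabs ((x - p) * t x)).
      { apply Rabs_triang. }
      rewrite !Rabs_mult, (Rabs_right (m - p)), (Rabs_right (x - p)) by lra.
      assert (A1 : (m - p) * Rabs (T - t x) <= eps / 2).
      { apply Rle_trans with ((m - p) * e').
        - apply Rmult_le_compat_l; [lra|]. apply Rabs_le; lra.
        - unfold e'; right; field; lra. }
      assert (A2 : (x - p) * Rabs (t x) < eps / 2).
      { apply Rle_lt_trans with (del * B).
        - apply Rmult_le_compat; try lra; apply Rabs_pos.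
        - apply Rle_lt_trans with (eps / (2 * (B + 1)) * B).
          + apply Rmult_le_compat_r; lra.
          + apply Rmult_lt_reg_r with (2 * (B + 1)); [lra|].
            replace (eps / (2 * (B + 1)) * B * (2 * (B + 1))) with (eps * B) by (field; lra).
            nra. }
      lra.
  - apply (cont_int h p q z (Rabs (g z - g p) / (z - p) + Rabs (g q - g z) / (q - z))).
    + lra.
    + apply Rplus_le_le_0_compat; apply Rdiv_le_0_compat; try apply Rabs_pos; lra.
    + intros x Hx. rewrite !hg by lra. apply (lip p q g z x Hc); lra.
Qed.

Lemma convex_sub a b p q g : convex_on a b g -> a <= p -> q <= b -> convex_on p q g.
Proof. intros Hc h1 h2 u v t Hu Hv Ht. apply Hc; lra || assumption. Qed.

Lemma convex_refl p q g : convex_on p q g -> convex_on (- q) (- p) (fun x => g (- x)).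
Proof.
  intros Hc u v t Hu Hv Ht. simpl.
  replace (- (t * u + (1 - t) * v)) with (t * (- u) + (1 - t) * (- v)) by ring.
  apply Hc; [lra|lra|exact Ht].
Qed.

Lemma convex_int p q g : p < q -> convex_on p q g -> ex_RInt g p q.
Proof.
  intros Hpq Hc. set (m := (p + q) / 2).
  apply (ex_RInt_Chasles g p m q).
  - apply (left_int p m q g); [unfold m; lra|exact Hc].
  - pose proof (left_int (- q) (- m) (- p) (fun x => g (- x)) ltac:(unfold m; lra)
                 (convex_refl p q g Hc)) as H.
    apply ex_RInt_swap in H.
    apply (ex_RInt_comp_opp (V:=R_CompleteNormedModule)) in H.
    apply (ex_RInt_opp (V:=R_CompleteNormedModule)) in H.
    apply (ex_RInt_ext _ g _ _) in H; [exact H|].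
    intros x _. rewrite opp_opp. simpl. rewrite Ropp_involutive. reflexivity.
Qed.

Lemma trap p q g : p < q -> convex_on p q g -> RInt g p q <= (q - p) / 2 * (g p + g q).
Proof.
  intros Hpq Hc.
  set (s := (g q - g p) / (q - p)).
  set (L := fun x => g p + (x - p) * s).
  set (F := fun x => g p * x + (x - p) ^ 2 / 2 * s).
  assert (HL : is_RInt L p q (minus (F q) (F p))).
  { apply (is_RInt_derive (V:=R_CompleteNormedModule)).
    - intros x _. unfold F, L. auto_derive; [exact I|]. field.
    - intros x _. apply continuity_pt_filterlim. unfold L. reg. }
  assert (EL : RInt L p q = (q - p) / 2 * (g p + g q)).
  { rewrite (is_RInt_unique _ _ _ _ HL). unfold minus, plus, opp, F, s; simpl. field. lra. }
  rewrite <- EL.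
  apply RInt_le; [lra| apply convex_int; assumption | eexists; exact HL |].
  intros x Hx. unfold L, s.
  pose proof (chord p q g p x q Hc ltac:(lra) ltac:(lra) ltac:(lra) ltac:(lra) Hpq) as C.
  apply Rmult_le_reg_l with (q - p); [lra|].
  replace ((q - p) * (g p + (x - p) * ((g q - g p) / (q - p)))) with ((q - x) * g p + (x - p) * g q)
    by (field; lra).
  exact C.
Qed.

Lemma rsum_id (u : nat -> R) c m :
  rsum (fun k => c * (u k + u (S k))) (S m) = c * (u 0%nat + u (S m) + 2 * rsum (fun k => u (S k)) m).
Proof.
  induction m as [|m IH].
  - simpl. ring.
  - change (rsum (fun k => c * (u k + u (S k))) (S m) + c * (u (S m) + u (S (S m)))
        = c * (u 0%nat + u (S (S m)) + 2 * (rsum (fun k => u (S k)) m + u (S m)))).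
    rewrite IH. ring.
Qed.

Lemma composite a b g n : a < b -> convex_on a b g -> (1 <= n)%nat ->
  RInt g a b <= (b - a) / (4 * INR n) *
     (INR (n + 1) * g a + INR (n + 1) * g b
      + 2 * rsum (fun k => g (a + INR (S k) * ((b - a) / INR n))) (n - 1)).
Proof.
  intros Hab Hc Hn.
  assert (Hn' : 0 < INR n) by (apply lt_0_INR; lia).
  set (h := (b - a) / INR n).
  assert (Hh : 0 < h) by (unfold h; apply Rdiv_lt_0_compat; lra).
  set (x := fun k : nat => a + INR k * h).
  assert (Hint : ex_RInt g a b) by (apply convex_int; assumption).
  assert (Hxr : forall k, (k <= n)%nat -> a <= x k <= b).
  { intros k Hk. unfold x. pose proof (pos_INR k). apply le_INR in Hk.
    split; [nra|].
    assert (INR k * h <= INR n * h) by (apply Rmult_le_compat_r; lra).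
    replace (INR n * h) with (b - a) in H0 by (unfold h; field; lra). lra. }
  assert (Step : forall m, (m <= n)%nat ->
     RInt g a (x m) <= rsum (fun k => h / 2 * (g (x k) + g (x (S k)))) m).
  { induction m as [|m IH]; intros Hm.
    - simpl. unfold x. rewrite Rmult_0_l, Rplus_0_r, RInt_point. apply Rle_refl.
    - specialize (IH ltac:(lia)).
      pose proof (Hxr m ltac:(lia)) as H1. pose proof (Hxr (S m) Hm) as H2.
      assert (Exm : x (S m) = x m + h) by (unfold x; rewrite S_INR; ring).
      assert (I1 : ex_RInt g a (x m)) by (apply (ex_RInt_Chasles_1 (V:=R_CompleteNormedModule) _ a (x m) b); [lra|exact Hint]).
      assert (I2 : ex_RInt g a (x (S m))) by (apply (ex_RInt_Chasles_1 (V:=R_CompleteNormedModule) _ a (x (S m)) b); [lra|exact Hint]).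
      assert (I3 : ex_RInt g (x m) (x (S m))) by (apply (ex_RInt_Chasles_2 (V:=R_CompleteNormedModule) _ a (x m) (x (S m))); [lra|exact I2]).
      rewrite <- (RInt_Chasles (V:=R_CompleteNormedModule) g a (x m) (x (S m)) I1 I3).
      change (RInt g a (x m) + RInt g (x m) (x (S m)) <=
              rsum (fun k => h / 2 * (g (x k) + g (x (S k)))) m + h / 2 * (g (x m) + g (x (S m)))).
      pose proof (trap (x m) (x (S m)) g ltac:(lra) (convex_sub a b (x m) (x (S m)) g Hc ltac:(lra) ltac:(lra))) as T.
      replace (x (S m) - x m) with h in T by (rewrite Exm; ring). lra. }
  pose proof (Step n (le_n n)) as Tn.
  destruct n as [|n']; [lia|].
  rewrite rsum_id in Tn.
  assert (Ex0 : x 0%nat = a) by (unfold x; simpl; ring).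
  assert (Exn : x (S n') = b) by (unfold x, h; field; lra).
  rewrite Ex0, Exn in Tn.
  pose proof (trap a b g Hab Hc) as Hh2.
  replace (S n' - 1)%nat with n' by lia.
  change (fun k => g (a + INR (S k) * ((b - a) / INR (S n')))) with (fun k => g (x (S k))).
  set (Sg := rsum (fun k => g (x (S k))) n') in *.
  replace (INR (S n' + 1)) with (INR (S n') + 1) by (rewrite plus_INR; simpl; ring).
  unfold h in Tn.
  apply Rle_trans with ((RInt g a b + RInt g a b) / 2); [lra|].
  apply Rle_trans with (((b - a) / INR (S n') / 2 * (g a + g b + 2 * Sg) + (b - a) / 2 * (g a + g b)) / 2); [lra|].
  change (rsum (fun k => g (a + INR (S k) * h)) n') with Sg. right. field. lra.
Qed.

Lemma rsum_nonneg F m : (forall k, (k < m)%nat -> 0 <= F k) -> 0 <= rsum F m.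
Proof.
  induction m as [|m IH]; intros H; simpl; [lra|].
  pose proof (H m ltac:(lia)). assert (0 <= rsum F m) by (apply IH; intros; apply H; lia). lra.
Qed.

Theorem theorem6 (a b c d : R) (f : R -> R -> R) (n : nat)
  (hab : a < b) (hcd : c < d)
  (hpos : forall x y, a <= x <= b -> c <= y <= d -> 0 <= f x y)
  (hconv : convex_coord a b c d f)
  (hn : (1 <= n)%nat) :
  let xk := fun k : nat => a + INR k * ((b - a) / INR n) in
  let yk := fun k : nat => c + INR k * ((d - c) / INR n) in
  Rint (fun x => Rint (fun y => f x y) c d) a b
  <= (b - a) / (4 * INR n) *
       (INR (n + 1) * Rint (fun y => f a y) c d
        + INR (n + 1) * Rint (fun y => f b y) c d
        + 2 * rsum (fun k => Rint (fun y => f (xk (S k)) y) c d) (n - 1))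
   + (d - c) / (4 * INR n) *
       (INR (n + 1) * Rint (fun x => f x c) a b
        + INR (n + 1) * Rint (fun x => f x d) a b
        + 2 * rsum (fun k => Rint (fun x => f x (yk (S k))) a b) (n - 1)).
Proof.
  intros xk yk. destruct hconv as [hcx hcy].
  assert (Hn' : 0 < INR n) by (apply lt_0_INR; lia).
  assert (IY : forall x, a <= x <= b -> ex_RInt (fun y => f x y) c d).
  { intros x Hx. apply convex_int; [exact hcd|apply hcy; exact Hx]. }
  assert (IX : forall y, c <= y <= d -> ex_RInt (fun x => f x y) a b).
  { intros y Hy. apply convex_int; [exact hab|apply hcx; exact Hy]. }
  set (g0 := fun x => Rint (fun y => f x y) c d).
  assert (Cg : convex_on a b g0).
  { intros u v t Hu Hv Ht. unfold g0.
    assert (Hw : a <= t * u + (1 - t) * v <= b) by nra.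
    rewrite !Rint_eq by (apply IY; assumption).
    assert (Eq : RInt (fun y => t * f u y + (1 - t) * f v y) c d
                 = t * RInt (fun y => f u y) c d + (1 - t) * RInt (fun y => f v y) c d).
    { apply is_RInt_unique.
      apply (is_RInt_plus (V:=R_NormedModule) (fun y => t * f u y) (fun y => (1 - t) * f v y)).
      - apply (is_RInt_scal (V:=R_NormedModule) (fun y => f u y)). apply (RInt_correct (V:=R_CompleteNormedModule)), IY, Hu.
      - apply (is_RInt_scal (V:=R_NormedModule) (fun y => f v y)). apply (RInt_correct (V:=R_CompleteNormedModule)), IY, Hv. }
    rewrite <- Eq.
    apply RInt_le; [lra| apply IY, Hw | |].
    - exists (t * RInt (fun y => f u y) c d + (1 - t) * RInt (fun y => f v y) c d).
      rewrite <- Eq. apply (RInt_correct (V:=R_CompleteNormedModule)).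
      apply (ex_RInt_plus (V:=R_NormedModule) (fun y => t * f u y) (fun y => (1 - t) * f v y)).
      + apply (ex_RInt_scal (V:=R_NormedModule) (fun y => f u y)). apply IY, Hu.
      + apply (ex_RInt_scal (V:=R_NormedModule) (fun y => f v y)). apply IY, Hv.
    - intros y Hy. apply (hcx y ltac:(lra) u v t Hu Hv Ht). }
  assert (Ig : ex_RInt g0 a b) by (apply convex_int; assumption).
  change (Rint g0 a b <= (b - a) / (4 * INR n) *
       (INR (n + 1) * g0 a + INR (n + 1) * g0 b
        + 2 * rsum (fun k => g0 (a + INR (S k) * ((b - a) / INR n))) (n - 1))
   + (d - c) / (4 * INR n) *
       (INR (n + 1) * Rint (fun x => f x c) a b
        + INR (n + 1) * Rint (fun x => f x d) a b
        + 2 * rsum (fun k => Rint (fun x => f x (yk (S k))) a b) (n - 1))).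
  rewrite Rint_eq by exact Ig.
  pose proof (composite a b g0 n hab Cg hn) as HX.
  assert (Hy : 0 <= (d - c) / (4 * INR n) *
       (INR (n + 1) * Rint (fun x => f x c) a b
        + INR (n + 1) * Rint (fun x => f x d) a b
        + 2 * rsum (fun k => Rint (fun x => f x (yk (S k))) a b) (n - 1))).
  { assert (P : forall y, c <= y <= d -> 0 <= Rint (fun x => f x y) a b).
    { intros y Hy. rewrite Rint_eq by (apply IX, Hy).
      apply RInt_ge_0; [lra|apply IX, Hy|]. intros x Hx. apply hpos; lra. }
    apply Rmult_le_pos.
    - apply Rdiv_le_0_compat; lra.
    - pose proof (pos_INR (n + 1)).
      assert (0 <= Rint (fun x => f x c) a b) by (apply P; lra).
      assert (0 <= Rint (fun x => f x d) a b) by (apply P; lra).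
      assert (0 <= rsum (fun k => Rint (fun x => f x (yk (S k))) a b) (n - 1)).
      { apply rsum_nonneg. intros k Hk. apply P. unfold yk.
        assert (Hh : 0 < (d - c) / INR n) by (apply Rdiv_lt_0_compat; lra).
        pose proof (pos_INR (S k)).
        assert (INR (S k) <= INR n) by (apply le_INR; lia).
        split; [nra|].
        assert (HH : INR (S k) * ((d - c) / INR n) <= INR n * ((d - c) / INR n)) by (apply Rmult_le_compat_r; lra).
        replace (INR n * ((d - c) / INR n)) with (d - c) in HH by (field; lra). lra. }
      nra. }
  lra.
Qed.
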